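(* Let $\{\varphi_i\}_{i=1}^M\subset\mathbb{R}^N$ be a set of nonzero vectors. If the family of hyperplanes $\{\varphi_i^\perp\}_{i=1}^M$ does norm retrieval, then either $\{\varphi_i\}_{i=1}^M$ spans $\mathbb{R}^N$ or $\{\varphi_i\}_{i=1}^M$ is linearly dependent.
   Context: For a nonzero vector $\varphi\in\mathbb{R}^N$, $\varphi^\perp=\{x\in\mathbb{R}^N:\langle x,\varphi\rangle=0\}$. A family of subspaces $\{W_i\}_{i=1}^M$ of $\mathbb{R}^N$ with orthogonal projections $\{P_i\}_{i=1}^M$ does norm retrieval if for all $x,y\in\mathbb{R}^N$, $\|P_ix\|=\|P_iy\|$ for all $i$ implies $\|x\|=\|y\|$. *)

(* Defs.v *)
From mathcomp Require Import all_boot all_order all_algebra.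
From mathcomp Require Import reals.
Set Implicit Arguments. Unset Strict Implicit. Unset Printing Implicit Defensive.
Import Order.TTheory GRing.Theory Num.Theory.
Local Open Scope ring_scope.

(* Vectors of R^N are row vectors 'rV[R]_N; subspaces are row spaces of matrices. *)
Section Defs.
Variables (R : realType) (N : nat).

Definition dotv (x y : 'rV[R]_N) : R := (x *m y^T) 0 0.

Definition normv (x : 'rV[R]_N) : R := Num.sqrt (dotv x x).

Definition perp (phi : 'rV[R]_N) : 'M[R]_N := kermx phi^T.

Definition is_orth_proj (W : 'M[R]_N) (P : 'rV[R]_N -> 'rV[R]_N) : Prop :=
  forall x, (P x <= W)%MS /\
            (forall w, (w <= W)%MS -> dotv (x - P x) w = 0).

Definition norm_retrieval (M : nat) (W : 'I_M -> 'M[R]_N) : Prop :=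
  forall P : 'I_M -> 'rV[R]_N -> 'rV[R]_N,
    (forall i, is_orth_proj (W i) (P i)) ->
    forall x y, (forall i, normv (P i x) = normv (P i y)) -> normv x = normv y.

End Defs.

(* Main.v *)
Require Import Defs.
From mathcomp Require Import all_boot all_order all_algebra.
From mathcomp Require Import reals.
From mathcomp Require Import ring.
Import Order.TTheory GRing.Theory Num.Theory.
Local Open Scope ring_scope.

Section Aux.
Variables (R : realType) (N : nat).
Implicit Types x y z : 'rV[R]_N.

Lemma dotvE x y : dotv x y = \sum_j x 0 j * y 0 j.
Proof. by rewrite /dotv mxE; apply: eq_bigr => j _; rewrite mxE. Qed.

Lemma dotvC x y : dotv x y = dotv y x.
Proof. by rewrite !dotvE; apply: eq_bigr => j _; rewrite mulrC. Qed.

Lemma dotvDl x y z : dotv (x + y) z = dotv x z + dotv y z.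
Proof. by rewrite !dotvE -big_split; apply: eq_bigr => j _; rewrite mxE mulrDl. Qed.

Lemma dotvZl a x y : dotv (a *: x) y = a * dotv x y.
Proof. by rewrite !dotvE mulr_sumr; apply: eq_bigr => j _; rewrite mxE mulrA. Qed.

Lemma dotvNl x y : dotv (- x) y = - dotv x y.
Proof. by rewrite -scaleN1r dotvZl mulN1r. Qed.

Lemma dotvBl x y z : dotv (x - y) z = dotv x z - dotv y z.
Proof. by rewrite dotvDl dotvNl. Qed.

Lemma dotvDr x y z : dotv z (x + y) = dotv z x + dotv z y.
Proof. by rewrite !(dotvC z) dotvDl. Qed.

Lemma dotvZr a x y : dotv y (a *: x) = a * dotv y x.
Proof. by rewrite !(dotvC y) dotvZl. Qed.

Lemma dotvBr x y z : dotv z (x - y) = dotv z x - dotv z y.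
Proof. by rewrite !(dotvC z) dotvBl. Qed.

Lemma dotv_ge0 x : 0 <= dotv x x.
Proof. by rewrite dotvE; apply: sumr_ge0 => j _; rewrite -expr2 sqr_ge0. Qed.

Lemma dotv_eq0 x : (dotv x x == 0) = (x == 0).
Proof.
apply/idP/idP => [|/eqP->]; last by rewrite dotvE big1 // => j _; rewrite mxE mul0r.
rewrite dotvE psumr_eq0 => [/allP H|j _]; last by rewrite -expr2 sqr_ge0.
apply/eqP/rowP => j; rewrite mxE.
have := H j (mem_index_enum j); rewrite /= -expr2 sqrf_eq0 => /eqP //.
Qed.

Lemma in_perp (phi w : 'rV[R]_N) : (w <= perp phi)%MS = (dotv w phi == 0).
Proof.
rewrite /perp sub_kermx /dotv; apply/eqP/eqP => [->|H]; first by rewrite mxE.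
by apply/rowP => i; rewrite ord1 H mxE.
Qed.

Definition projp (phi : 'rV[R]_N) x := x - (dotv x phi / dotv phi phi) *: phi.

Lemma projp_orth phi : phi != 0 -> is_orth_proj (perp phi) (projp phi).
Proof.
move=> nz x; have nz' : dotv phi phi != 0 by rewrite dotv_eq0.
split.
  by rewrite in_perp /projp dotvBl dotvZl mulfVK // subrr.
move=> w; rewrite in_perp => /eqP Hw.
by rewrite /projp opprB addrC subrK dotvZl (dotvC phi) Hw mulr0.
Qed.

End Aux.
Arguments dotvC {R N}.
Arguments projp {R N}.
Arguments projp_orth {R N}.

Theorem mainTheorem3 (R : realType) (N M : nat) (phi : 'I_M -> 'rV[R]_N) :
  (forall i, phi i != 0) ->
  norm_retrieval (fun i => perp (phi i)) ->
  row_full (\matrix_(i < M) phi i) \/ ~~ row_free (\matrix_(i < M) phi i).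
Proof.
move=> nz NR.
set F := \matrix_(i < M) phi i.
case free: (row_free F); last by right.
case full: (row_full F); first by left.
exfalso.
have fullT : row_full F^T by rewrite /row_full mxrank_tr.
pose b : 'rV[R]_M := \row_i Num.sqrt (dotv (phi i) (phi i)).
pose s := b *m pinvmx F^T.
have Hs i : dotv s (phi i) = Num.sqrt (dotv (phi i) (phi i)).
  have := congr1 (fun m : 'rV_M => m 0 i) (mulmxKpV (submx_full b fullT)).
  move=> E; have -> : Num.sqrt (dotv (phi i) (phi i)) = b 0 i by rewrite mxE.
  rewrite -E mxE dotvE; apply: eq_bigr => j _.
  by rewrite !mxE.
have kn0 : kermx F^T != 0.
  rewrite -mxrank_eq0 mxrank_ker mxrank_tr.
  move: full; rewrite /row_full => /negbT.
  have := rank_leq_col F; rewrite subn_eq0 -ltnNge.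
  by move=> le ne; rewrite ltn_neqAle ne le.
pose w := nz_row (kermx F^T).
have wn0 : w != 0 by rewrite nz_row_eq0.
have wphi i : dotv w (phi i) = 0.
  have /sub_kermxP E := nz_row_sub (kermx F^T).
  have := congr1 (fun m : 'rV_M => m 0 i) E; rewrite /= mxE [RHS]mxE => <-.
  by rewrite dotvE; apply: eq_bigr => j _; rewrite !mxE.
have ww0 : 0 < dotv w w by rewrite lt_def dotv_eq0 wn0 dotv_ge0.
pose u := (Num.sqrt (dotv w w))^-1 *: w.
have uu : dotv u u = 1.
  rewrite dotvZl dotvZr mulrA -expr2 exprVn sqr_sqrtr ?mulVf //.
    by rewrite gt_eqF.
  by rewrite ltW.
have uphi i : dotv u (phi i) = 0 by rewrite dotvZl wphi mulr0.
pose s' := s - dotv s u *: u.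
have s'phi i : dotv s' (phi i) = Num.sqrt (dotv (phi i) (phi i)).
  by rewrite dotvBl dotvZl uphi mulr0 subr0 Hs.
have s'u : dotv s' u = 0 by rewrite dotvBl dotvZl uu mulr1 subrr.
clearbody s'.
pose x := s' + u.
pose y := Num.sqrt (dotv s' s') *: u.
have xx : dotv x x = dotv s' s' + 1.
  by rewrite /x !dotvDl !dotvDr s'u (dotvC u s') s'u uu !addr0 add0r.
have yy : dotv y y = dotv s' s'.
  by rewrite /y dotvZl dotvZr uu mulr1 -expr2 sqr_sqrtr // dotv_ge0.
have Hne : normv x = normv y -> False.
  rewrite /normv xx yy => /(congr1 (fun t => t ^+ 2)).
  rewrite !sqr_sqrtr ?dotv_ge0 ?addr_ge0 ?dotv_ge0 //.
  by move/eqP; rewrite -subr_eq0 addrC addKr oner_eq0.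
apply: Hne; apply: (NR (fun i => projp (phi i)) (fun i => projp_orth _ (nz i)) x y) => i.
rewrite /normv; congr Num.sqrt.
have pp0 : dotv (phi i) (phi i) != 0 by rewrite dotv_eq0.
have -> : projp (phi i) y = y.
  by rewrite /projp /y dotvZl uphi mulr0 mul0r scale0r subr0.
rewrite yy /projp dotvBl !dotvBr !dotvZl !dotvZr (dotvC (phi i) x).
have xphi : dotv x (phi i) = Num.sqrt (dotv (phi i) (phi i)).
  by rewrite dotvDl s'phi uphi addr0.
rewrite xphi xx.
have sq : Num.sqrt (dotv (phi i) (phi i)) ^+ 2 = dotv (phi i) (phi i).
  by rewrite sqr_sqrtr // dotv_ge0.
set q := Num.sqrt _ in sq *.
set p := dotv (phi i) (phi i) in sq pp0 *.
rewrite -sq in pp0 *.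
have q0 : q != 0 by move: pp0; rewrite expf_eq0.
field; exact: q0.
Qed.
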